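(* Let $q=2^m$ and $\mu_{q+1}=\{\delta\in\mathbb{F}_{q^2}:\delta^{q+1}=1\}$. The map $x\mapsto \dfrac{x^q}{1+x^{1+q}}$ is exactly 2-to-1 on $\mathbb{F}_{q^2}^{*}\setminus\mu_{q+1}$: for $s,t\in\mathbb{F}_{q^2}^{*}\setminus\mu_{q+1}$ one has $\frac{s^q}{1+s^{1+q}}=\frac{t^q}{1+t^{1+q}}$ if and only if $t=s$ or $t=s^{-q}$, and these two values are distinct. *)

(* Defs.v *)
From HB Require Import structures.
From mathcomp Require Import all_boot all_order all_algebra all_field.
Set Implicit Arguments. Unset Strict Implicit. Unset Printing Implicit Defensive.
Import GRing.Theory.
Local Open Scope ring_scope.

Definition qmap (F : fieldType) (q : nat) (x : F) : F :=
  x ^+ q / (1 + x ^+ (1 + q)).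

Definition in_mu (F : fieldType) (q : nat) (x : F) : bool := x ^+ q.+1 == 1.

(* Main.v *)
Require Import Defs.
From HB Require Import structures.
From mathcomp Require Import all_boot all_order all_algebra all_field.
From mathcomp Require Import ring.
Import GRing.Theory.
Local Open Scope ring_scope.

Theorem mainTheorem7 (m : nat) (F : finFieldType)
  (hF : #|F| = ((2 ^ m) ^ 2)%N) (s t : F) :
  let q := (2 ^ m)%N in
  s != 0 -> ~~ in_mu q s -> t != 0 -> ~~ in_mu q t ->
  (qmap q s = qmap q t <-> (t = s \/ t = (s ^+ q)^-1)) /\ s != (s ^+ q)^-1.
Proof.
move=> q s0 ms t0 mt.
have c2 : (2%N \in [pchar F]).
  by apply: (@card_finPcharP _ 2 (m * 2)); rewrite // hF -expnM.
have Hq : forall x : F, x ^+ q ^+ q = x.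
  by move=> x; rewrite -exprM -[RHS](expf_card x) hF /q expnS expn1.
have cn : [pchar F].-nat q.
  by rewrite /q pnatX; apply/orP; left; rewrite pnatE.
have hD : forall x y : F, (x + y) ^+ q = x ^+ q + y ^+ q.
  by move=> x y; apply: exprDn_pchar.
have Hfix : forall x : F, (x * x ^+ q) ^+ q = x * x ^+ q.
  by move=> x; rewrite exprMn Hq mulrC.
have nz1 : forall x : F, ~~ in_mu q x -> 1 + x * x ^+ q != 0.
  move=> x; rewrite /in_mu exprS; apply: contra; rewrite addr_eq0 => /eqP h.
  by rewrite -(oppr_pchar2 c2 1) h opprK.
have qmE : forall x : F, qmap q x = x ^+ q / (1 + x * x ^+ q).
  by move=> x; rewrite /qmap add1n exprS.
have Sq0 : s ^+ q != 0 by rewrite expf_neq0.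
have Tq0 : t ^+ q != 0 by rewrite expf_neq0.
have ns := nz1 s ms; have nt := nz1 t mt.
split.
- rewrite !qmE; split.
  + move=> E.
    set S := s ^+ q in E Sq0 ns *. set T := t ^+ q in E Tq0 nt *.
    have E1 : S * (1 + t * T) = T * (1 + s * S).
      by apply/eqP; rewrite -eqr_div // E.
    have E2 : s * (1 + t * T) = t * (1 + s * S).
      move: (congr1 (fun z => z ^+ q) E1) => /=.
      by rewrite !exprMn !hD !expr1n /S /T !Hfix !Hq.
    have E3 : (s * S - t * T) * (1 - (s * S) * (t * T)) = 0.
      have : (S * (1 + t * T)) * (s * (1 + t * T)) = (T * (1 + s * S)) * (t * (1 + s * S)).
        by rewrite E1 E2.
      move=> h.
      transitivity ((S * (1 + t * T)) * (s * (1 + t * T)) - (T * (1 + s * S)) * (t * (1 + s * S))); first ring.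
      by rewrite h subrr.
    move/eqP: E3; rewrite mulf_eq0 => /orP [/eqP h|/eqP h].
    * left; apply/(mulIf ns); rewrite -E2.
      by move/eqP: h; rewrite subr_eq0 => /eqP ->.
    * right.
      have h1 : (s * S) * (t * T) = 1.
        by apply/eqP; rewrite eq_sym -subr_eq0; apply/eqP.
      have h2 : t * S * (1 + s * S) = 1 + s * S.
        transitivity (S * (t * (1 + s*S))); first ring.
        rewrite -E2. transitivity (s*S + (s*S)*(t*T)); first ring.
        by rewrite h1 addrC.
      have h3 : t * S = 1 by apply/(mulIf ns); rewrite h2 mul1r.
      by rewrite -[t]mulr1 -(mulfV Sq0) mulrA h3 mul1r.
  + case=> [->|->] //.
    rewrite exprVn Hq.
    have -> : 1 + (s ^+ q)^-1 * s^-1 = (1 + s * s ^+ q) / (s * s ^+ q).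
      by field; rewrite Sq0 s0.
    by field; rewrite Sq0 s0 ns.
- apply: contra ms => /eqP h.
  by rewrite /in_mu exprS {1}h mulVf.
Qed.
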